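(* Let $\mathbb{K}$ be a field and $\Delta$ a $d$-dimensional simplicial complex on vertex set $[n]$ such that $\tilde H_d(\Delta;\mathbb{K})\ne0$. Set $R=\mathbb{K}[x_1,\dots,x_n]$, $L=x_1+\dots+x_n$ and $J=I_\Delta+(x_1^{d+2},\dots,x_n^{d+2})$. Then the multiplication map $$\times L:\Big(\frac{R}{J}\Big)_{\binom{d+2}{2}-1}\to\Big(\frac{R}{J}\Big)_{\binom{d+2}{2}}$$ is not surjective.
   Context: $I_\Delta=(\prod_{i\in\tau}x_i:\tau\subseteq[n],\tau\notin\Delta)$ is the Stanley–Reisner ideal of $\Delta$. *)

(* Defs.v *)
From HB Require Import structures.
From mathcomp Require Import all_boot all_order all_algebra.
From mathcomp Require Import mpoly.
Set Implicit Arguments. Unset Strict Implicit. Unset Printing Implicit Defensive.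
Import Order.TTheory GRing.Theory.
Local Open Scope ring_scope.

Definition simplicial_complex (n : nat) (D : {set {set 'I_n}}) : Prop :=
  [/\ set0 \in D,
      (forall s t : {set 'I_n}, t \in D -> s \subset t -> s \in D) &
      (forall i : 'I_n, [set i] \in D)].

Definition has_dim (n : nat) (D : {set {set 'I_n}}) (d : nat) : Prop :=
  (exists2 s, s \in D & #|s| = d.+1) /\ (forall s, s \in D -> (#|s| <= d.+1)%N).

(* Reduced simplicial k-chains with coefficients in K: functions on faces,
   supported on the faces of D of cardinality k+1 (k-dimensional faces;
   for k = -1 the empty face, which makes the chain complex augmented). *)
Definition is_chain (K : fieldType) (n : nat) (D : {set {set 'I_n}}) (k : nat)
  (c : {set 'I_n} -> K) : Prop :=
  forall s, ~~ ((s \in D) && (#|s| == k.+1)) -> c s = 0.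

(* Simplicial boundary, faces oriented by the natural order of vertices:
   d[v_0<...<v_k] = sum_i (-1)^i [v_0..^v_i..v_k]. *)
Definition boundary (K : fieldType) (n : nat) (c : {set 'I_n} -> K)
  (t : {set 'I_n}) : K :=
  \sum_(v : 'I_n | v \notin t)
     (-1) ^+ #|[set u in t | (u < v)%N]| * c (v |: t).

Definition reduced_homology_nonzero (K : fieldType) (n : nat)
  (D : {set {set 'I_n}}) (k : nat) : Prop :=
  exists z : {set 'I_n} -> K,
    [/\ is_chain D k z,
        (forall t, boundary z t = 0) &
        ~ (exists2 w : {set 'I_n} -> K, is_chain D k.+1 w &
             forall s, z s = boundary w s)].

Definition sqfree_mono (K : fieldType) (n : nat) (t : {set 'I_n}) : {mpoly K[n]} :=
  \prod_(i in t) 'X_i.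

Definition in_J (K : fieldType) (n : nat) (D : {set {set 'I_n}}) (e : nat)
  (p : {mpoly K[n]}) : Prop :=
  exists (a : {set 'I_n} -> {mpoly K[n]}) (b : 'I_n -> {mpoly K[n]}),
    p = \sum_(t : {set 'I_n} | t \notin D) a t * sqfree_mono K t
        + \sum_(i : 'I_n) b i * 'X_i ^+ e.

Definition Lsum (K : fieldType) (n : nat) : {mpoly K[n]} := \sum_(i : 'I_n) 'X_i.

(* Surjectivity of x L : (R/J)_k -> (R/J)_{k+1}, J homogeneous: every
   homogeneous f of degree k+1 is congruent mod J to L*g, g homogeneous of
   degree k. *)
Definition mulL_surjective (K : fieldType) (n : nat) (D : {set {set 'I_n}})
  (e k : nat) : Prop :=
  forall f : {mpoly K[n]}, f \is k.+1.-homog ->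
    exists2 g : {mpoly K[n]}, g \is k.-homog & in_J D e (f - Lsum K n * g).

(* Main.v *)
Require Import Defs.
From HB Require Import structures.
From mathcomp Require Import all_boot all_order all_algebra.
From mathcomp Require Import mpoly.
From mathcomp Require Import fingroup perm.
Set Implicit Arguments. Unset Strict Implicit. Unset Printing Implicit Defensive.
Import Order.TTheory GRing.Theory.
Local Open Scope ring_scope.

Lemma uniq_map_inj (T : eqType) (U : eqType) (f : T -> U) (s : seq T) x y :
  uniq (map f s) -> x \in s -> y \in s -> f x = f y -> x = y.
Proof.
elim: s => //= a s IH /andP[fa us]; rewrite !inE => /orP[/eqP->|xs] /orP[/eqP->|ys] //.
- by move=> e; move: fa; rewrite e map_f.
- by move=> e; move: fa; rewrite -e map_f.
- exact: IH.
Qed.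

Lemma nth_bump (T : Type) (x0 y : T) s1 s2 k :
  nth x0 (s1 ++ y :: s2) (bump (size s1) k) = nth x0 (s1 ++ s2) k.
Proof.
rewrite /bump !nth_cat; case: (ltnP k (size s1)) => hk.
  by rewrite add0n hk.
by rewrite add1n ltnNge (leq_trans hk (leqnSn _)) /= subSn.
Qed.

Lemma pigeon (d : nat) (s : seq nat) :
  uniq s -> size s = d.+1 -> all (fun v => 0 < v <= d.+1)%N s ->
  forall v, (0 < v <= d.+1)%N -> v \in s.
Proof.
move=> us ss /allP al v hv.
have sub : {subset s <= iota 1 d.+1}.
  by move=> x hx; rewrite mem_iota add1n; exact: al.
have [_ e] := uniq_min_size us sub (eq_leq (etrans (size_iota _ _) (esym ss))).
by rewrite e mem_iota add1n.
Qed.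

Lemma split_enum (n : nat) (i : 'I_n) : exists L1 L2,
  [/\ enum 'I_n = L1 ++ i :: L2, all (fun x : 'I_n => x < i)%N L1 &
      all (fun x : 'I_n => i < x)%N L2].
Proof.
have hi : (i < size (enum 'I_n))%N by rewrite size_enum_ord.
exists (take i (enum 'I_n)), (drop i.+1 (enum 'I_n)).
have nth_i : nth i (enum 'I_n) i = i by apply: val_inj; rewrite /= nth_enum_ord.
split.
- by rewrite -{1}(cat_take_drop i (enum 'I_n)) (drop_nth i hi) nth_i.
- apply/allP=> x hx.
  have : val x \in map val (take i (enum 'I_n)) by rewrite map_f.
  rewrite map_take val_enum_ord take_iota mem_iota /= add0n.
  by move=> h; apply: leq_trans h (geq_minl _ _).
- apply/allP=> x hx.
  have : val x \in map val (drop i.+1 (enum 'I_n)) by rewrite map_f.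
  by rewrite map_drop val_enum_ord drop_iota mem_iota add0n; case/andP.
Qed.

Section Main.
Variables (K : fieldType) (n d : nat) (D : {set {set 'I_n}}) (z : {set 'I_n} -> K).
Hypothesis zc : is_chain D d z.

Local Notation mon := 'X_{1..n}.

Definition Fs (m : mon) := [seq x <- enum 'I_n | m x != 0%N].
Definition ev (m : mon) := [seq m x | x <- Fs m].
Definition Am (m : mon) : 'M[K]_d.+1 := \matrix_(k, l) ((nth 0%N (ev m) k == l.+1)%:R).
Definition supp (m : mon) := [set x | m x != 0%N].
Definition phi m := z (supp m) * \det (Am m).

Lemma size_Fs m : size (Fs m) = #|supp m|.
Proof.
rewrite -(card_uniqP (filter_uniq _ (enum_uniq _))).
by apply: eq_card => x; rewrite mem_filter mem_enum /supp inE andbT.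
Qed.

Lemma z_nz s : z s != 0 -> (s \in D) /\ #|s| = d.+1.
Proof.
move=> h; case: (boolP ((s \in D) && (#|s| == d.+1))) => [/andP[a /eqP b]|] //.
by move/zc=> e; rewrite e eqxx in h.
Qed.

Lemma ev_pos m : all (fun v => 0 < v)%N (ev m).
Proof. by apply/allP=> v /mapP[x]; rewrite mem_filter => /andP[h _] ->; rewrite lt0n. Qed.

Lemma det_row0 (A : 'M[K]_d.+1) k : (forall l, A k l = 0) -> \det A = 0.
Proof. by move=> h; rewrite (expand_det_row _ k) big1 // => l _; rewrite h mul0r. Qed.

Lemma phi_nz m : phi m != 0 ->
  [/\ size (ev m) = d.+1, uniq (ev m) & all (fun v => 0 < v <= d.+1)%N (ev m)].
Proof.
rewrite /phi mulf_eq0 negb_or => /andP[zn dn].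
have sz : size (ev m) = d.+1 by rewrite size_map size_Fs; case: (z_nz zn).
split => //.
  case: (boolP (uniq (ev m))) => // /(uniqPn 0%N) [k1 [k2 [lt12 lt2 e]]]; exfalso; move/eqP: dn; apply.
  rewrite sz in lt2.
  apply: (@determinant_alternate _ _ _ (Ordinal (ltn_trans lt12 lt2)) (Ordinal lt2)).
    by rewrite -val_eqE /= neq_ltn lt12.
  by move=> l; rewrite !mxE /= e.
apply/allP=> v hv; have := allP (ev_pos m) v hv => /= ->; rewrite /=.
rewrite leqNgt; apply/negP => hlt; move/eqP: dn; apply.
have hk : (index v (ev m) < d.+1)%N by rewrite -sz index_mem.
apply: (@det_row0 _ (Ordinal hk)) => l; rewrite mxE /= nth_index //.
case: eqP => // e; move: hlt; rewrite e ltnS leqNgt ltn_ord //.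
Qed.

Definition Bm (m : mon) : 'M[K]_d := \matrix_(k, l) ((nth 0%N (ev m) k == l.+2)%:R).

Lemma supp_add_out (m : mon) (i : 'I_n) : m i = 0%N -> supp (m + U_(i))%MM = i |: supp m.
Proof.
move=> h; apply/setP => x; rewrite !inE mnmDE mnm1E.
by case: (eqVneq x i) => [->|ne]; rewrite ?addn1 ?addn0.
Qed.

Lemma supp_add_in (m : mon) (i : 'I_n) : m i != 0%N -> supp (m + U_(i))%MM = supp m.
Proof.
move=> h; apply/setP => x; rewrite !inE mnmDE mnm1E.
by case: (eqVneq x i) => [->|ne]; rewrite ?addn1 ?addn0 ?h.
Qed.

Lemma nth_mid (T : Type) (x0 y : T) s1 s2 : nth x0 (s1 ++ y :: s2) (size s1) = y.
Proof. by rewrite nth_cat ltnn subnn. Qed.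

Lemma det_ins (m : mon) (i : 'I_n) : m i = 0%N -> #|supp m| = d ->
  \det (Am (m + U_(i))%MM) = (-1) ^+ #|[set u in supp m | (u < i)%N]| * \det (Bm m).
Proof.
move=> mi0 cs.
have [L1 [L2 [E h1 h2]]] := split_enum i.
set m' := (m + U_(i))%MM.
have m'E x : x != i -> m' x = m x.
  by move=> ne; rewrite /m' mnmDE mnm1E eq_sym (negPf ne) addn0.
have m'i : m' i = 1%N by rewrite /m' mnmDE mnm1E eqxx mi0.
have ne1 : {in L1, forall x, x != i}.
  by move=> x /(allP h1) hx; apply/eqP => e; move: hx; rewrite e ltnn.
have ne2 : {in L2, forall x, x != i}.
  by move=> x /(allP h2) hx; apply/eqP => e; move: hx; rewrite e ltnn.
set G1 := [seq x <- L1 | m x != 0%N]; set G2 := [seq x <- L2 | m x != 0%N].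
have evm' : ev m' = map m G1 ++ 1%N :: map m G2.
  rewrite /ev /Fs E filter_cat /= m'i /= map_cat /=; congr (_ ++ _ :: _).
  - rewrite (@eq_in_filter _ _ (fun x => m x != 0%N)); last by move=> x /ne1 /m'E ->.
    by apply/eq_in_map => x; rewrite mem_filter => /andP[_ /ne1 /m'E].
  - by rewrite m'i.
  - rewrite (@eq_in_filter _ _ (fun x => m x != 0%N)); last by move=> x /ne2 /m'E ->.
    by apply/eq_in_map => x; rewrite mem_filter => /andP[_ /ne2 /m'E].
have evm : ev m = map m G1 ++ map m G2.
  by rewrite /ev /Fs E filter_cat /= mi0 eqxx /= map_cat.
have hp : #|[set u in supp m | (u < i)%N]| = size (map m G1).
  have -> : #|[set u in supp m | (u < i)%N]| =
            #|[seq u <- enum 'I_n | (m u != 0%N) && (u < i)%N]|.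
    by apply: eq_card => x; rewrite mem_filter mem_enum !inE andbT.
  rewrite (card_uniqP (filter_uniq _ (enum_uniq _))) size_filter E count_cat /= ltnn andbF.
  rewrite size_map size_filter add0n (@eq_in_count _ _ pred0 L2); last first.
    by move=> x /(allP h2) hx; rewrite /= ltnNge (ltnW hx) andbF.
  rewrite count_pred0 addn0; apply: eq_in_count => x /(allP h1) hx.
  by rewrite /= hx andbT.
have hle : (size (map m G1) < d.+1)%N.
  rewrite -hp ltnS -cs; apply: subset_leq_card; apply/subsetP => x; rewrite !inE.
  by case/andP.
rewrite (expand_det_row _ (Ordinal hle)) (bigD1 ord0) //= big1 ?addr0; last first.
  move=> j nj; rewrite mxE /= evm' nth_mid.
  have -> : (1 == j.+1)%N = false.
    by rewrite eqSS; apply: contraNF nj => /eqP e; apply/eqP/val_inj; rewrite /= -e.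
  by rewrite mul0r.
rewrite mxE /= evm' nth_mid eqxx mul1r /cofactor addn0 hp; congr (_ * _).
congr (\det _); apply/matrixP => k l; rewrite !mxE /=.
by rewrite evm' nth_bump -evm.
Qed.

Lemma sum_out (m : mon) : (forall t, boundary z t = 0) ->
  \sum_(i | m i == 0%N) phi (m + U_(i))%MM = 0.
Proof.
move=> zcyc; case: (eqVneq #|supp m| d) => cs; last first.
  apply: big1 => i /eqP mi0; rewrite /phi supp_add_out //.
  rewrite zc ?mul0r //; rewrite cardsU1 inE mi0 eqxx /= add1n eqSS (negPf cs) andbF //.
transitivity (\sum_(i | m i == 0%N)
   ((-1) ^+ #|[set u in supp m | (u < i)%N]| * z (i |: supp m)) * \det (Bm m)).
  apply: eq_bigr => i /eqP mi0; rewrite /phi supp_add_out // det_ins //.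
  by rewrite mulrA (mulrC (z _)).
rewrite -mulr_suml.
have -> : \sum_(i | m i == 0%N) (-1) ^+ #|[set u in supp m | (u < i)%N]| * z (i |: supp m)
   = boundary z (supp m).
  by rewrite /boundary; apply: eq_bigl => i; rewrite inE negbK.
by rewrite zcyc mul0r.
Qed.

Lemma Fs_add_in (m : mon) (i : 'I_n) : m i != 0%N -> Fs (m + U_(i))%MM = Fs m.
Proof.
move=> h; apply: eq_filter => x; rewrite mnmDE mnm1E.
by case: (eqVneq i x) => [<-|ne]; rewrite ?addn1 ?addn0 ?h.
Qed.

Lemma Fs_uniq (m : mon) : uniq (Fs m).
Proof. exact: filter_uniq (enum_uniq _). Qed.

Lemma mem_Fs (m : mon) x : (x \in Fs m) = (m x != 0%N).
Proof. by rewrite mem_filter mem_enum andbT. Qed.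

Lemma det_xrow_neg (A : 'M[K]_d.+1) a b : a != b -> \det (xrow a b A) = - \det A.
Proof.
by move=> ne; rewrite xrowE det_mulmx /tperm_mx det_perm odd_tperm ne expr1 mulN1r.
Qed.

Lemma swap_pair (m : mon) (i j : 'I_n) : i != j -> m i = m j -> m i != 0%N ->
  phi (m + U_(i))%MM = - phi (m + U_(j))%MM.
Proof.
move=> ne e mi.
have mj : m j != 0%N by rewrite -e.
rewrite /phi !supp_add_in //.
case: (eqVneq (z (supp m)) 0) => [->|zn]; first by rewrite !mul0r oppr0.
have [_ cs] := z_nz zn.
have sz : size (Fs m) = d.+1 by rewrite size_Fs.
have iF : i \in Fs m by rewrite mem_Fs.
have jF : j \in Fs m by rewrite mem_Fs.
have ha : (index i (Fs m) < d.+1)%N by rewrite -sz index_mem.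
have hb : (index j (Fs m) < d.+1)%N by rewrite -sz index_mem.
have nab : Ordinal ha != Ordinal hb.
  apply: contra ne; rewrite -val_eqE /= => /eqP h.
  by rewrite -(nth_index i iF) h (nth_index i jF).
suff -> : Am (m + U_(j))%MM = xrow (Ordinal ha) (Ordinal hb) (Am (m + U_(i))%MM).
  by rewrite det_xrow_neg // mulrN opprK.
apply/matrixP => k l; rewrite !mxE /ev !Fs_add_in //.
have hk : (k < size (Fs m))%N by rewrite sz.
have tk : (tperm (Ordinal ha) (Ordinal hb) k < size (Fs m))%N by rewrite sz.
rewrite (nth_map i _ _ hk) (nth_map i _ _ tk) !mnmDE !mnm1E.
case: tpermP => [->|->|ka kb] /=.
- by rewrite !nth_index // (@eq_sym _ j i) (negPf ne) !addn0 e.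
- by rewrite !nth_index // !eqxx e.
- have xi : i != nth i (Fs m) k.
    apply/negP => /eqP h; apply: ka; apply/val_inj => /=; by rewrite h index_uniq ?Fs_uniq.
  have xj : j != nth i (Fs m) k.
    apply/negP => /eqP h; apply: kb; apply/val_inj => /=; by rewrite h index_uniq ?Fs_uniq.
  by rewrite (negPf xi) (negPf xj).
Qed.

Lemma T_partner (m : mon) (i : 'I_n) : m i != 0%N ->
  phi (m + U_(i))%MM = \sum_(j | (j != i) && (m j == m i)) phi (m + U_(i))%MM.
Proof.
move=> mi.
case: (eqVneq (phi (m + U_(i))%MM) 0) => [->|pn]; first by rewrite big1.
have [sz un al] := phi_nz pn.
set m' := (m + U_(i))%MM.
have evE : ev m' = map m' (Fs m) by rewrite /ev Fs_add_in.
have m'i : m' i = (m i).+1 by rewrite /m' mnmDE mnm1E eqxx addn1.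
have m'E x : x != i -> m' x = m x.
  by move=> ne; rewrite /m' mnmDE mnm1E eq_sym (negPf ne) addn0.
have iF : i \in Fs m by rewrite mem_Fs.
have hv : (0 < m i <= d.+1)%N.
  have : m' i \in ev m' by rewrite evE map_f.
  move/(allP al) => /andP[_ h]; rewrite lt0n mi /=; rewrite m'i in h.
  exact: ltnW.
have := pigeon un sz al hv; rewrite evE => /mapP[x xF ex].
have xi : x != i by apply/eqP => exi; move: ex; rewrite exi m'i; apply: n_Sn.
rewrite (@eq_bigl _ _ _ _ _ _ (pred1 x)) ?big_pred1_eq // => j /=.
apply/idP/idP => [/andP[ji /eqP mj]|/eqP ->]; last by rewrite xi -(m'E _ xi) -ex eqxx.
have jF : j \in Fs m by rewrite mem_Fs mj.
apply/eqP; apply: (uniq_map_inj (f := m') (s := Fs m)); rewrite -?evE //.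
by rewrite (m'E _ ji) mj ex.
Qed.

Lemma sum_in (m : mon) : \sum_(i | m i != 0%N) phi (m + U_(i))%MM = 0.
Proof.
pose T i := phi (m + U_(i))%MM.
pose R (i j : 'I_n) := [&& m i != 0%N, j != i & m j == m i].
have RS i j : R i j = R j i.
  rewrite /R; apply/and3P/and3P => [[a b /eqP c]|[a b /eqP c]];
    by split; rewrite ?c // eq_sym.
have -> : \sum_(i | m i != 0%N) T i = \sum_i \sum_(j | R i j) T i.
  rewrite big_mkcond; apply: eq_bigr => i _; case: ifP => h.
    by rewrite /T {1}(T_partner h); apply: eq_bigl => j; rewrite /R h.
  by rewrite big_pred0 // => j; rewrite /R h.
have -> : \sum_i \sum_(j | R i j) T i =
   \sum_i \sum_(j | R i j && (i < j)%N) T i + \sum_i \sum_(j | R i j && ~~ (i < j)%N) T i.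
  rewrite -big_split; apply: eq_bigr => i _.
  by rewrite (bigID (fun j : 'I_n => (i < j)%N)).
rewrite [X in _ + X](exchange_big_dep (fun _ => true)) //=.
have -> : \sum_j \sum_(i | R i j && ~~ (i < j)%N) T i =
          \sum_j \sum_(i | R j i && (j < i)%N) T i.
  apply: eq_bigr => j _; apply: eq_bigl => i; rewrite RS.
  case: (boolP (R j i)) => //= /and3P[_ ij _].
  by rewrite -leqNgt leq_eqVlt; move: ij; rewrite eq_sym -val_eqE /= => /negPf ->.
apply/eqP; rewrite addr_eq0 -sumrN; apply/eqP; apply: eq_bigr => i _.
rewrite -sumrN; apply: eq_bigr => j /andP[/and3P[a b /eqP c] _].
by rewrite /T (swap_pair (m := m) (i := i) (j := j)) // eq_sym.
Qed.

Lemma sum_all (m : mon) : (forall t, boundary z t = 0) ->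
  \sum_i phi (m + U_(i))%MM = 0.
Proof.
move=> zcyc; rewrite (bigID (fun i => m i == 0%N)) /= sum_out // sum_in addr0 //.
Qed.

Definition Phi (p : {mpoly K[n]}) : K := \sum_(m <- msupp p) p@_m * phi m.

Lemma Phi_sup p r : uniq r -> {subset msupp p <= r} ->
  Phi p = \sum_(m <- r) p@_m * phi m.
Proof.
move=> ur sub; rewrite [RHS](bigID (fun m => m \in msupp p)) /=.
rewrite [X in _ = _ + X]big1 ?addr0; last first.
  by move=> m hm; rewrite memN_msupp_eq0 // mul0r.
rewrite -big_filter; apply: perm_big; apply: uniq_perm.
- exact: msupp_uniq.
- exact: filter_uniq.
- by move=> x; rewrite mem_filter; case: (boolP (x \in msupp p)) => // /sub ->.
Qed.

Lemma PhiD p q : Phi (p + q) = Phi p + Phi q.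
Proof.
set r := undup (msupp p ++ msupp q ++ msupp (p + q)).
have ur : uniq r by exact: undup_uniq.
rewrite !(@Phi_sup _ r) //; last 3 first.
- by move=> x hx; rewrite mem_undup !mem_cat hx ?orbT.
- by move=> x hx; rewrite mem_undup !mem_cat hx ?orbT.
- by move=> x hx; rewrite mem_undup !mem_cat hx ?orbT.
by rewrite -big_split; apply: eq_bigr => m _; rewrite mcoeffD mulrDl.
Qed.

Lemma PhiZ c p : Phi (c *: p) = c * Phi p.
Proof.
rewrite (@Phi_sup _ (msupp p)) ?msupp_uniq //; last exact: msuppZ_le.
rewrite /Phi mulr_sumr; apply: eq_bigr => m _. by rewrite mcoeffZ -mulrA.
Qed.

Lemma Phi0 : Phi 0 = 0.
Proof. by have := PhiZ 0 0; rewrite scale0r mul0r. Qed.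

Lemma PhiB p q : Phi (p - q) = Phi p - Phi q.
Proof. by rewrite PhiD -scaleN1r PhiZ mulN1r. Qed.

Lemma Phi_sum (I : Type) (r : seq I) (P : pred I) (F : I -> {mpoly K[n]}) :
  Phi (\sum_(i <- r | P i) F i) = \sum_(i <- r | P i) Phi (F i).
Proof. exact: (big_morph Phi PhiD Phi0). Qed.

Lemma PhiX m : Phi 'X_[m] = phi m.
Proof. by rewrite /Phi msuppX big_seq1 mcoeffX eqxx mul1r. Qed.

Lemma PhiMX q T : Phi (q * 'X_[T]) = \sum_(m <- msupp q) q@_m * phi (m + T)%MM.
Proof.
rewrite {1}(mpolyE q) mulr_suml Phi_sum; apply: eq_bigr => m _.
by rewrite -scalerAl -mpolyXD PhiZ PhiX.
Qed.

Lemma Phi_L g : (forall t, boundary z t = 0) -> Phi (Lsum K n * g) = 0.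
Proof.
move=> zcyc; rewrite mulrC /Lsum mulr_sumr Phi_sum.
rewrite (eq_bigr _ (fun i _ => PhiMX g U_(i))) exchange_big /=.
by apply: big1 => m _; rewrite -mulr_sumr sum_all // mulr0.
Qed.

Lemma Phi_J p : (forall s t : {set 'I_n}, t \in D -> s \subset t -> s \in D) ->
  in_J D d.+2 p -> Phi p = 0.
Proof.
move=> hcl [a [b ->]]; rewrite PhiD !Phi_sum !big1 ?addr0 //.
- move=> i _; rewrite mpolyXn PhiMX; apply: big1 => m _.
  set m' := (m + U_(i) *+ d.+2)%MM.
  case: (eqVneq (phi m') 0) => [->|pn]; first by rewrite mulr0.
  have [sz un al] := phi_nz pn.
  have m'i : m' i = (m i + d.+2)%N by rewrite /m' mnmDE mulmnE mnm1E eqxx mul1n.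
  have : m' i \in ev m' by rewrite map_f // mem_Fs m'i addnS.
  move/(allP al) => /andP[_]; rewrite m'i => h; exfalso; move: h.
  by rewrite addnS ltnNge leq_addl.
- move=> t tD; rewrite /sqfree_mono mprodXE PhiMX.
  apply: big1 => m _; rewrite /phi zc ?mul0r ?mulr0 //.
  apply/negP => /andP[SD _]; move/negP: tD; apply; apply: hcl SD _.
  apply/subsetP => x xt; rewrite inE mnmDE mnm_sumE (bigD1 x) //= mnm1E eqxx.
  by rewrite addnCA add1n.
Qed.

Lemma witness (s : {set 'I_n}) : z s != 0 ->
  exists m0 : mon, phi m0 != 0 /\ mdeg m0 = 'C(d.+2, 2).
Proof.
move=> zn; have [sD cs] := z_nz zn.
have [x0 _] : exists x0, x0 \in s.
  by apply/set0Pn; rewrite -card_gt0 cs.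
pose m0 := [multinom (if i \in s then (index i (enum s)).+1 else 0%N) | i < n].
have m0E i : m0 i = (if i \in s then (index i (enum s)).+1 else 0%N) by rewrite mnmE.
have suppE : supp m0 = s.
  by apply/setP => i; rewrite inE m0E; case: (i \in s).
have FsE : Fs m0 = enum s.
  rewrite /Fs enumT /enum_mem; apply: eq_filter => x; rewrite m0E.
  by rewrite -[mem s x]/(x \in s); case: (x \in s).
have szs : size (enum s) = d.+1 by rewrite -cardE.
have evk k : (k < d.+1)%N -> nth 0%N (ev m0) k = k.+1.
  move=> hk; have hin : nth x0 (enum s) k \in s by rewrite -mem_enum mem_nth ?szs.
  rewrite /ev FsE (nth_map x0) ?szs // m0E hin.
  by rewrite index_uniq ?szs ?enum_uniq.
exists m0; split.
  rewrite /phi suppE mulf_neq0 //.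
  suff -> : Am m0 = 1%:M by rewrite det1 oner_neq0.
  apply/matrixP => k l; rewrite !mxE evk // eqSS.
rewrite mdegE.
rewrite (eq_bigr (fun i => if i \in s then (index i (enum s)).+1 else 0%N)); last by move=> i _; rewrite m0E.
rewrite -big_mkcond /= -big_enum (big_nth x0) szs /=.
rewrite (@eq_big_nat _ _ _ 0 d.+1 _ (fun k => k.+1)); last first.
  by move=> k /andP[_ hk]; rewrite index_uniq ?szs ?enum_uniq.
by rewrite -bin2_sum [RHS]big_nat_recl.
Qed.

End Main.

Local Close Scope ring_scope.
Unset Implicit Arguments.
Local Open Scope ring_scope.

Theorem proposition5p9 (K : fieldType) (n d : nat) (D : {set {set 'I_n}}) :
  simplicial_complex D -> has_dim D d ->
  reduced_homology_nonzero K D d ->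
  ~ mulL_surjective K D d.+2 ('C(d.+2, 2) - 1).
Proof.
move=> [h0 hcl hsing] hdim [z [zc zcyc znb]] surj.
case: (boolP [exists s, z s != 0]) => [/existsP [s zn] | /existsPn hall]; last first.
  apply: znb; exists (fun _ => 0); first by move=> s _.
  move=> s; rewrite /boundary big1; last by move=> v _; rewrite mulr0.
  by have := hall s; rewrite negbK => /eqP.
have [m0 [pn deg]] := witness zc zn.
have hf : ('X_[m0] : {mpoly K[n]}) \is ('C(d.+2, 2) - 1).+1.-homog.
  rewrite dhomogX; apply/eqP; transitivity ('C(d.+2, 2)); first exact: deg.
  by rewrite subn1 prednK // bin_gt0.
have [g hg hJ] := surj _ hf.
move: pn; have := Phi_J zc hcl hJ.
by rewrite PhiB PhiX (Phi_L zc) // subr0 => ->; rewrite eqxx.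
Qed.
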